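(* Let $\mathbf v,\mathbf o\in\mathbb{R}^n$, $\mathbf u\in\mathbb{R}^n\setminus\{0\}$, $d\in\mathbb{R}$ and $r>0$, and consider the problem $$f^*=\min_{\mathbf w\in\mathbb{R}^n}\mathbf v^T\mathbf w\quad\text{s.t.}\quad\mathbf u^T\mathbf w\le d,\ \ \|\mathbf w-\mathbf o\|\le r,$$ assumed feasible in the sense that $\frac{|\mathbf u^T\mathbf o-d|}{\|\mathbf u\|}\le r$. Let $d'=d-\mathbf u^T\mathbf o$. Then: 1. If $\mathbf v^T\mathbf u+\frac{\|\mathbf v\|d'}{r}\ge0$, then $f^*=\mathbf v^T\mathbf o-r\|\mathbf v\|$. 2. Otherwise, $$f^*=\mathbf v^T\mathbf o-\|\mathbf v^\perp\|\sqrt{r^2-\frac{(d')^2}{\|\mathbf u\|^2}}+\frac{\mathbf v^T\mathbf u\,d'}{\|\mathbf u\|^2},$$ where $\mathbf v^\perp=\mathbf v-\frac{\mathbf v^T\mathbf u}{\|\mathbf u\|^2}\mathbf u$.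
   Context: $\|\cdot\|$ denotes the Euclidean norm. *)

(* Defs.v *)
From HB Require Import structures.
From mathcomp Require Import all_boot all_order all_algebra.
From mathcomp Require Import reals.
Set Implicit Arguments. Unset Strict Implicit. Unset Printing Implicit Defensive.
Import Order.TTheory GRing.Theory Num.Theory.
Local Open Scope ring_scope.

Definition dotv (R : realType) (n : nat) (x y : 'rV[R]_n) : R :=
  \sum_(i < n) x ord0 i * y ord0 i.

Definition normv (R : realType) (n : nat) (x : 'rV[R]_n) : R :=
  Num.sqrt (dotv x x).

Definition feasible (R : realType) (n : nat) (u o : 'rV[R]_n) (d r : R)
  (w : 'rV[R]_n) : Prop :=
  dotv u w <= d /\ normv (w - o) <= r.

Definition is_min_value (R : realType) (n : nat) (v u o : 'rV[R]_n) (d r f : R)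
  : Prop :=
  (exists w, feasible u o d r w /\ dotv v w = f) /\
  (forall w, feasible u o d r w -> f <= dotv v w).

(* Main.v *)
Require Import Defs.
From HB Require Import structures.
From mathcomp Require Import all_boot all_order all_algebra.
From mathcomp Require Import reals.
From mathcomp Require Import ring lra.
Import Order.TTheory GRing.Theory Num.Theory.
Set Implicit Arguments. Unset Strict Implicit.
Local Open Scope ring_scope.

Section V.
Variables (R : realType) (n : nat).
Implicit Types (x y z : 'rV[R]_n) (a : R).

Lemma dotvC x y : dotv x y = dotv y x.
Proof. by apply: eq_bigr => i _; rewrite mulrC. Qed.
Lemma dotvDr x y z : dotv x (y + z) = dotv x y + dotv x z.
Proof. by rewrite /dotv -big_split; apply: eq_bigr => i _; rewrite mxE mulrDr. Qed.
Lemma dotvZr x a y : dotv x (a *: y) = a * dotv x y.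
Proof. by rewrite /dotv mulr_sumr; apply: eq_bigr => i _; rewrite mxE mulrCA. Qed.
Lemma dotvNr x y : dotv x (- y) = - dotv x y.
Proof. by rewrite -scaleN1r dotvZr mulN1r. Qed.
Lemma dotvBr x y z : dotv x (y - z) = dotv x y - dotv x z.
Proof. by rewrite dotvDr dotvNr. Qed.
Lemma dotvDl x y z : dotv (y + z) x = dotv y x + dotv z x.
Proof. by rewrite dotvC dotvDr !(dotvC x). Qed.
Lemma dotvZl x a y : dotv (a *: y) x = a * dotv y x.
Proof. by rewrite dotvC dotvZr dotvC. Qed.
Lemma dotvBl x y z : dotv (y - z) x = dotv y x - dotv z x.
Proof. by rewrite dotvC dotvBr !(dotvC x). Qed.
Lemma dotv0l x : dotv 0 x = 0.
Proof. by rewrite -(scale0r (0 : 'rV[R]_n)) dotvZl mul0r. Qed.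
Lemma dotvv_ge0 x : 0 <= dotv x x.
Proof. by apply: sumr_ge0 => i _; rewrite -expr2 sqr_ge0. Qed.
Lemma dotvv_eq0 x : dotv x x = 0 -> x = 0.
Proof.
move=> /eqP; rewrite psumr_eq0 => [/allP H|i _]; last by rewrite -expr2 sqr_ge0.
apply/rowP => i; rewrite mxE; have := H i (mem_index_enum _).
by rewrite -expr2 sqrf_eq0 => /eqP.
Qed.
Lemma normv_ge0 x : 0 <= normv x.
Proof. exact: sqrtr_ge0. Qed.
Lemma normv_sq x : normv x ^+ 2 = dotv x x.
Proof. by rewrite sqr_sqrtr // dotvv_ge0. Qed.
Lemma CS x y : dotv x y ^+ 2 <= dotv x x * dotv y y.
Proof.
have [H0|Hp] := eqVneq (dotv x x) 0.
  by move/dotvv_eq0: (H0) => ->; rewrite !dotv0l expr0n mul0r.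
have Np : 0 < dotv x x by rewrite lt0r Hp dotvv_ge0.
have := dotvv_ge0 (dotv x x *: y - dotv x y *: x).
rewrite !dotvBl !dotvBr !dotvZl !dotvZr (dotvC y x) => H.
have : 0 <= dotv x x * (dotv x x * dotv y y - dotv x y ^+ 2) by nra.
rewrite pmulr_rge0 // subr_ge0 //.
Qed.
Lemma CSl x y : - (normv x * normv y) <= dotv x y.
Proof.
have := CS x y; rewrite -!normv_sq -exprMn => H.
have := mulr_ge0 (normv_ge0 x) (normv_ge0 y).
move: H; set b := normv x * normv y; set a := dotv x y; nra.
Qed.
End V.
Lemma lam_ok (R : realType) (c N d r s P V : R) :
  0 < N -> 0 < r -> 0 <= s -> 0 <= P -> 0 <= V ->
  V ^+ 2 = c ^+ 2 * N + P ^+ 2 -> N * s ^+ 2 = N * r ^+ 2 - d ^+ 2 ->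
  c * N * r + V * d < 0 -> c * N * s + d * P <= 0.
Proof.
move=> N0 r0 s0 P0 V0 HV Hs H.
have [c0|c0] := lerP 0 c; have [d0|d0] := lerP 0 d.
- have : 0 <= c * N * r + V * d.
    apply: addr_ge0; [apply: mulr_ge0; [apply: mulr_ge0|]|apply: mulr_ge0]; lra.
  lra.
-
  have h1 : c * N * r < - d * V by lra.
  have h2 : (c * N * r) ^+ 2 < (d * V) ^+ 2.
    have : 0 <= c * N * r by apply: mulr_ge0; [apply: mulr_ge0|]; lra.
    nra.
  have h3 : (c * N * s) ^+ 2 <= (d * P) ^+ 2.
    have E : (c * N * s) ^+ 2 = c^+2 * N * (N * s ^+ 2) by ring.
    rewrite E Hs.
    have E2 : (c * N * r) ^+ 2 = c^+2 * N * (N * r ^+ 2) by ring.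
    rewrite E2 exprMn HV in h2. nra.
  have : 0 <= c * N * s by apply: mulr_ge0; [apply: mulr_ge0|]; lra.
  have : 0 <= - d * P by apply: mulr_ge0; lra.
  nra.
-
  have h1 : d * V < - c * N * r by lra.
  have h2 : (d * V) ^+ 2 < (c * N * r) ^+ 2.
    have : 0 <= d * V by apply: mulr_ge0; lra.
    nra.
  have h3 : (d * P) ^+ 2 <= (c * N * s) ^+ 2.
    have E : (c * N * s) ^+ 2 = c^+2 * N * (N * s ^+ 2) by ring.
    rewrite E Hs.
    have E2 : (c * N * r) ^+ 2 = c^+2 * N * (N * r ^+ 2) by ring.
    rewrite E2 exprMn HV in h2. nra.
  have : 0 <= - c * N * s by apply: mulr_ge0; [apply: mulr_ge0|]; lra.
  have : 0 <= d * P by apply: mulr_ge0; lra.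
  nra.
- have : 0 <= - c * N * s by apply: mulr_ge0; [apply: mulr_ge0|]; lra.
  have : 0 <= - d * P by apply: mulr_ge0; lra.
  lra.
Qed.

Lemma s0_ok (R : realType) (c N d r P V : R) :
  0 < N -> 0 < r -> 0 <= P -> 0 <= V ->
  V ^+ 2 = c ^+ 2 * N + P ^+ 2 -> d ^+ 2 = r ^+ 2 * N ->
  c * N * r + V * d < 0 -> d <= 0.
Proof.
move=> N0 r0 P0 V0 HV Hd H; rewrite leNgt; apply/negP => d0.
have h : (c * N * r) ^+ 2 <= (V * d) ^+ 2.
  have E0 : (V * d) ^+ 2 = V ^+ 2 * d ^+ 2 by ring.
  rewrite E0 HV Hd.
  have : 0 <= P^+2 * r^+2 * N by apply: mulr_ge0; [apply: mulr_ge0|]; nra.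
  have E : (c * N * r) ^+ 2 = c ^+ 2 * N * (r ^+ 2 * N) by ring.
  rewrite E; nra.
have : 0 <= V * d by apply: mulr_ge0; lra.
nra.
Qed.

Lemma dotv0r (R : realType) n (x : 'rV[R]_n) : dotv x 0 = 0.
Proof. by rewrite dotvC dotv0l. Qed.

Lemma normv_le (R : realType) n (x : 'rV[R]_n) r :
  0 <= r -> (normv x <= r) <-> (dotv x x <= r ^+ 2).
Proof.
move=> r0; have := normv_ge0 x; rewrite -normv_sq; split => Hx; nra.
Qed.

Lemma feas_in (R : realType) n (v u o : 'rV[R]_n) d r f x : 0 <= r ->
  dotv u x <= d - dotv u o -> dotv x x <= r ^+ 2 -> f = dotv v o + dotv v x ->
  exists w, feasible u o d r w /\ dotv v w = f.
Proof.
move=> r0 h1 h2 ->; exists (o + x); split; last by rewrite dotvDr.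
split; first by rewrite dotvDr; lra.
by rewrite addrAC subrr add0r; apply/normv_le.
Qed.

Lemma feas_low (R : realType) n (v u o : 'rV[R]_n) d r f : 0 <= r ->
  (forall x, dotv u x <= d - dotv u o -> dotv x x <= r ^+ 2 ->
     f <= dotv v o + dotv v x) ->
  forall w, feasible u o d r w -> f <= dotv v w.
Proof.
move=> r0 H w [h1 h2].
move/normv_le: h2 => /(_ r0) h2.
have h3 : dotv u (w - o) <= d - dotv u o by rewrite dotvBr; lra.
have := H _ h3 h2; rewrite dotvBr; lra.
Qed.

Theorem lemma8 (R : realType) (n : nat) (v o u : 'rV[R]_n) (d r : R)
  (hu : u != 0) (hr : 0 < r)
  (hfeas : `|dotv u o - d| / normv u <= r) :
  let d' := d - dotv u o in
  (0 <= dotv v u + normv v * d' / r ->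
     is_min_value v u o d r (dotv v o - r * normv v)) /\
  (dotv v u + normv v * d' / r < 0 ->
     is_min_value v u o d r
       (dotv v o
        - normv (v - (dotv v u / normv u ^+ 2) *: u)
            * Num.sqrt (r ^+ 2 - d' ^+ 2 / normv u ^+ 2)
        + dotv v u * d' / normv u ^+ 2)).
Proof.
move=> d'.
have r0 : 0 <= r by lra.
have Nge := dotvv_ge0 u.
have Np : 0 < dotv u u.
  rewrite lt0r Nge andbT; apply/negP => /eqP /dotvv_eq0 H.
  by move: hu; rewrite H eqxx.
rewrite normv_sq.
set N := dotv u u in Np Nge *.
have nup : 0 < normv u by rewrite /normv sqrtr_gt0.
have hd : d' ^+ 2 <= r ^+ 2 * N.
  rewrite ler_pdivrMr // distrC in hfeas.
  have := normv_sq u; rewrite -/N => E.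
  move: hfeas; rewrite -/d' ler_norml => /andP [h1 h2].
  have E2 : r ^+ 2 * N = (r * normv u) ^+ 2 by rewrite exprMn E.
  rewrite E2; nra.
set V := normv v.
have V0 : 0 <= V by apply: normv_ge0.
have VV : V ^+ 2 = dotv v v by apply: normv_sq.
split.
- move=> C1; split.
  + have [v0|vn0] := eqVneq (dotv v v) 0.
      have vz := dotvv_eq0 v0.
      have V00 : V = 0 by rewrite /V /normv v0 sqrtr0.
      have [dp|dn] := lerP 0 d'.
        apply: (feas_in (x := 0)) => //; rewrite ?dotv0r //.
          by rewrite sqr_ge0.
        by rewrite V00 vz !dotv0l; ring.
      apply: (feas_in (x := (d' / N) *: u)) => //.
      * by rewrite dotvZr -/N divfK ?gt_eqF.
      * rewrite dotvZl dotvZr -/N.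
        have E : d' / N * (d' / N * N) = d' ^+ 2 / N by field; rewrite gt_eqF.
        by rewrite E ler_pdivrMr.
      * by rewrite V00 vz !dotv0l; ring.
    have Vp : 0 < V by rewrite /V /normv sqrtr_gt0 lt0r vn0 dotvv_ge0.
    apply: (feas_in (x := - (r / V) *: v)) => //.
    * rewrite dotvZr (dotvC u v) -/d'.
      have : 0 <= r / V * (dotv v u + V * d' / r).
        by apply: mulr_ge0 => //; apply: divr_ge0.
      have E : r / V * (dotv v u + V * d' / r) = r / V * dotv v u + d'.
        by field; rewrite !gt_eqF.
      rewrite E; lra.
    * rewrite dotvZl dotvZr -VV.
      have E : - (r / V) * (- (r / V) * V ^+ 2) = r ^+ 2 by field; rewrite gt_eqF.
      by rewrite E.
    * rewrite dotvZr -VV.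
      have E : - (r / V) * V ^+ 2 = - (r * V) by field; rewrite gt_eqF.
      rewrite E; ring.
  + apply: feas_low => // x h1 h2.
    have := CSl v x; rewrite -/V.
    have : normv x <= r by apply/normv_le.
    have := normv_ge0 x.
    nra.
- move=> C2.
  have C2' : dotv v u * r + V * d' < 0.
    have E : dotv v u * r + V * d' = (dotv v u + V * d' / r) * r.
      by field; rewrite gt_eqF.
    rewrite E pmulr_llt0 //.
  set c := dotv v u / N.
  have cN : dotv v u = c * N by rewrite /c divfK ?gt_eqF.
  set p := v - c *: u.
  have vdec : v = p + c *: u by rewrite /p subrK.
  have pu : dotv p u = 0 by rewrite /p dotvBl dotvZl -/N cN subrr.
  have up : dotv u p = 0 by rewrite dotvC.
  set P := normv p.
  have P0 : 0 <= P by apply: normv_ge0.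
  have PP : P ^+ 2 = dotv p p by apply: normv_sq.
  have vp : dotv v p = P ^+ 2 by rewrite {1}vdec dotvDl dotvZl up mulr0 addr0 PP.
  have VVc : V ^+ 2 = c ^+ 2 * N + P ^+ 2.
    rewrite VV {1}vdec dotvDl dotvZl (dotvC u v) (dotvC p v) vp cN; ring.
  have harg : 0 <= r ^+ 2 - d' ^+ 2 / N.
    by rewrite subr_ge0 ler_pdivrMr.
  set s := Num.sqrt (r ^+ 2 - d' ^+ 2 / N).
  have s0 : 0 <= s by apply: sqrtr_ge0.
  have ss : s ^+ 2 = r ^+ 2 - d' ^+ 2 / N by rewrite sqr_sqrtr.
  have Nss : N * s ^+ 2 = N * r ^+ 2 - d' ^+ 2.
    by rewrite ss; field; rewrite gt_eqF.
  have C3 : c * N * r + V * d' < 0 by rewrite -cN.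
  have tgt : dotv v u * d' / N = c * d' by rewrite cN; field; rewrite gt_eqF.
  rewrite tgt.
  split.
  + apply: (feas_in (x := (d' / N) *: u - (s / P) *: p)) => //.
    * by rewrite dotvBr !dotvZr up mulr0 subr0 -/N divfK ?gt_eqF.
    * rewrite !dotvBl !dotvBr !dotvZl !dotvZr up pu -/N -PP !mulr0 !subr0 sub0r.
      have h1 : (s / P) * ((s / P) * P ^+ 2) <= s ^+ 2.
        have [->|Pn0] := eqVneq P 0; first by rewrite expr0n !mulr0 sqr_ge0.
        by rewrite le_eqVlt; apply/orP; left; apply/eqP; field.
      have E : d' / N * (d' / N * N) = d' ^+ 2 / N by field; rewrite gt_eqF.
      rewrite opprK E; lra.
    * rewrite dotvBr !dotvZr vp cN.
      have h1 : (s / P) * P ^+ 2 = s * P.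
        have [->|Pn0] := eqVneq P 0; first by rewrite expr0n !mulr0.
        by field.
      by rewrite h1; field; rewrite gt_eqF.
  + apply: feas_low => // x h1 h2.
    rewrite -/d' in h1.
    have vx : dotv v x = dotv p x + c * dotv u x by rewrite {1}vdec dotvDl dotvZl.
    rewrite vx.
    set t := dotv u x in h1 *.
    have [s00|sp] := eqVneq s 0.
    * have hd0 : d' ^+ 2 = r ^+ 2 * N.
        by move: Nss; rewrite s00 expr0n mulr0 => /eqP; rewrite eq_sym subr_eq0 mulrC => /eqP.
      have dneg := s0_ok Np hr P0 V0 VVc hd0 C3.
      have ht2 : t ^+ 2 <= N * dotv x x by apply: CS.
      have ht : t = d'.
        have : N * dotv x x <= N * r ^+ 2 by rewrite ler_pM2l.
        nra.
      set z := x - (t / N) *: u.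
      have zz : dotv z z = dotv x x - t ^+ 2 / N.
        rewrite /z !dotvBl !dotvBr !dotvZl !dotvZr (dotvC x u) -/t -/N.
        by field; rewrite gt_eqF.
      have zz0 : dotv z z <= 0.
        rewrite zz ht; move: ss; rewrite s00 expr0n /= => ss'.
        lra.
      have pz := CS p z.
      have pzp : dotv p x = dotv p z.
        by rewrite /z dotvBr dotvZr pu mulr0 subr0.
      have pz0 : dotv p z = 0.
        have := dotvv_ge0 p; have := dotvv_ge0 z; nra.
      rewrite pzp pz0 ht s00; lra.
    * have spos : 0 < s by rewrite lt0r sp s0.
      set beta := - d' * P / (N * s).
      have Nsp : 0 < N * s by apply: mulr_gt0.
      have lam : c <= beta.
        rewrite /beta ler_pdivlMr //.
        have := lam_ok Np hr s0 P0 V0 VVc Nss C3; lra.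
      set w' := beta *: u + p.
      have w'x : dotv w' x = beta * t + dotv p x by rewrite /w' dotvDl dotvZl.
      have rr : r ^+ 2 = s ^+ 2 + d' ^+ 2 / N by rewrite ss; ring.
      have ww : dotv w' w' = (P * r / s) ^+ 2.
        have gen : forall a (y z : 'rV[R]_n), dotv (a *: y + z) (a *: y + z)
            = a ^+ 2 * dotv y y + 2 * a * dotv y z + dotv z z.
          move=> a y z; rewrite !dotvDl !dotvDr !dotvZl !dotvZr (dotvC z y); ring.
        rewrite /w' gen up -PP -/N /beta.
        rewrite !exprMn rr; field; rewrite ?gt_eqF //.
      have Prs : 0 <= P * r / s by apply: divr_ge0 => //; apply: mulr_ge0.
      have nw : normv w' = P * r / s by rewrite /normv ww sqrtr_sqr ger0_norm.
      have cs := CSl w' x.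
      rewrite nw in cs.
      have nx : normv x <= r by apply/normv_le.
      have m1 : P * r / s * normv x <= P * r / s * r by rewrite ler_wpM2l.
      have m2 : (beta - c) * t <= (beta - c) * d' by rewrite ler_wpM2l // subr_ge0.
      have key : P * r / s * r + (beta - c) * d' = P * s - c * d'.
        have E : P * r / s * r = P * r ^+ 2 / s by field; rewrite gt_eqF.
        rewrite E rr /beta; field; rewrite ?gt_eqF //.
      lra.
Qed.
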